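(* Let $D_K$ be a relative $K$-entropy satisfying Properties (a), (b), (c) and (d) below, and let $H_K$ be the associated conditional entropy, defined by one of the two forms below. Let $X=\{X_j\}$ be an arbitrary POVM on $\mathcal{H}_A$. Then for every density operator $\rho_{AB}$, $$H_K(X|B)\ge\log\frac{1}{c(X)},\qquad c(X):=\max_j\|X_j\|_\infty .$$
   Context: All Hilbert spaces are finite-dimensional; $\log$ has an arbitrary but fixed base; $\|\cdot\|_\infty$ is the largest singular value. A relative $K$-entropy $D_K$ assigns to every pair $(S,T)$ of positive semidefinite operators on a common Hilbert space an extended real number $D_K(S\|T)$. Properties: (a) for every trace-preserving completely positive map (TPCPM) $\mathcal{E}$ (possibly between different spaces), $D_K(\mathcal{E}(S)\|\mathcal{E}(T))\le D_K(S\|T)$; (b) for positive semidefinite $S,T$ on $\mathcal{H}$ and $T'$ on $\mathcal{H}'$, $D_K(S\oplus 0\,\|\,T\oplus T')=D_K(S\|T)$; (c) for every constant $c>0$, $D_K(S\|cT)=D_K(S\|T)+\log\frac1c$; (d) $D_K(\rho\|\rho)=0$ for every density operator $\rho$. The conditional $K$-entropy of a density operator $\rho_{AB}$ is either $H_K(A|B)=-D_K(\rho_{AB}\|\mathbb{1}_A\otimes\rho_B)$ for all $\rho_{AB}$, or $H_K(A|B)=\max_{\sigma_B}[-D_K(\rho_{AB}\|\mathbb{1}_A\otimes\sigma_B)]$ for all $\rho_{AB}$, maximum over density operators $\sigma_B$. For a POVM $X=\{X_j\}$ on $\mathcal{H}_A$, let $\mathcal{X}:\rho_A\mapsto\sum_j|j\rangle\langle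 j|_X\,\mathrm{Tr}(X_j\rho_A)$ with $\{|j\rangle\}$ orthonormal in a register $\mathcal{H}_X$; $H_K(X|B)$ denotes $H_K$ of the state $(\mathcal{X}\otimes\mathcal{I})(\rho_{AB})$ (register $X$ given $B$). *)

(* Defs.v *)
From HB Require Import structures.
From mathcomp Require Import all_boot all_order all_algebra.
From mathcomp Require Import complex mxtens.
From mathcomp Require Import classical_sets reals ereal exp.

Set Implicit Arguments.
Unset Strict Implicit.
Unset Printing Implicit Defensive.

Import Order.TTheory GRing.Theory Num.Theory.
Local Open Scope ring_scope.
Local Open Scope classical_set_scope.

Section QDefs.
Variable R : realType.
Local Notation C := (R[i]).

Definition adjmx {m n} (A : 'M[C]_(m, n)) : 'M[C]_(n, m) :=
  (map_mx (@Num.conj C) A)^T.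

Definition psd {n} (A : 'M[C]_n) : Prop :=
  adjmx A = A /\ forall v : 'cV[C]_n, 0 <= (adjmx v *m A *m v) 0 0.

Definition density {n} (rho : 'M[C]_n) : Prop := psd rho /\ \tr rho = 1.

Definition vnorm {n} (v : 'cV[C]_n) : R :=
  Num.sqrt (\sum_i ((complex.Re (v i 0)) ^+ 2 + (complex.Im (v i 0)) ^+ 2)).

Definition opnorm {m n} (A : 'M[C]_(m, n)) : R :=
  sup [set vnorm (A *m v) | v in [set v : 'cV[C]_n | vnorm v = 1]].

Definition logb (b x : R) : R := ln x / ln b.

Definition linmap {n m} (E : 'M[C]_n -> 'M[C]_m) : Prop :=
  forall (a : C) (x y : 'M[C]_n), E (a *: x + y) = a *: E x + E y.

(* (E (x) id_k) acting on H_n (x) H_k, tensor index convention of mxtens *)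
Definition ampl {n m} k (E : 'M[C]_n -> 'M[C]_m) (M : 'M[C]_(n * k))
  : 'M[C]_(m * k) :=
  \matrix_(p, q)
    E (\matrix_(i, j) M (mxtens_index (i, (mxtens_unindex p).2))
                        (mxtens_index (j, (mxtens_unindex q).2)))
      (mxtens_unindex p).1 (mxtens_unindex q).1.

Arguments ampl {n m} k E M.

Definition tpcpm {n m} (E : 'M[C]_n -> 'M[C]_m) : Prop :=
  [/\ linmap E,
      (forall M, \tr (E M) = \tr M) &
      (forall k (M : 'M[C]_(n * k)), psd M -> psd (ampl k E M))].

Definition ptrA {a b} (M : 'M[C]_(a * b)) : 'M[C]_b :=
  \matrix_(j, l) \sum_(i < a) M (mxtens_index (i, j)) (mxtens_index (i, l)).

Definition Dfam := forall n, 'M[C]_n -> 'M[C]_n -> \bar R.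

Definition propA (D : Dfam) : Prop :=
  forall n m (E : 'M[C]_n -> 'M[C]_m), (0 < n)%N -> (0 < m)%N -> tpcpm E ->
    forall S T, psd S -> psd T -> (D m (E S) (E T) <= D n S T)%E.

Definition propB (D : Dfam) : Prop :=
  forall n m, (0 < n)%N -> (0 < m)%N ->
    forall (S T : 'M[C]_n) (T' : 'M[C]_m), psd S -> psd T -> psd T' ->
      D (n + m)%N (block_mx S 0 0 0) (block_mx T 0 0 T') = D n S T.

Definition propC (b : R) (D : Dfam) : Prop :=
  forall n, (0 < n)%N -> forall (S T : 'M[C]_n) (c : R), psd S -> psd T ->
    0 < c -> D n S ((c%:C)%C *: T) = (D n S T + (logb b (1 / c))%:E)%E.

Definition propD (D : Dfam) : Prop :=
  forall n, (0 < n)%N -> forall rho : 'M[C]_n, density rho -> D n rho rho = 0%E.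

Inductive cform := CondPlain | CondOpt.

Definition HK (f : cform) (D : Dfam) {a b} (rho : 'M[C]_(a * b)) : \bar R :=
  match f with
  | CondPlain => (- D _ rho (1%:M *t ptrA rho))%E
  | CondOpt => ereal_sup [set (- D _ rho (1%:M *t s))%E
                          | s in [set s : 'M[C]_b | density s]]
  end.

Definition povm {a k} (X : 'I_k -> 'M[C]_a) : Prop :=
  (forall j, psd (X j)) /\ \sum_j X j = 1%:M.

Definition measmap {a k} (X : 'I_k -> 'M[C]_a) (rho : 'M[C]_a) : 'M[C]_k :=
  \matrix_(i, j) (if i == j then \tr (X i *m rho) else 0).

Definition cX {a k} (X : 'I_k -> 'M[C]_a) : R :=
  \big[Num.max/0]_(j < k) opnorm (X j).

End QDefs.

Arguments ampl {R n m} k E M.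

(* Main.v *)
Require Import Defs.
From HB Require Import structures.
From mathcomp Require Import all_boot all_order all_algebra.
From mathcomp Require Import complex mxtens spectral sesquilinear.
From mathcomp Require Import classical_sets reals ereal exp.
From mathcomp Require Import lra.
Import Order.TTheory GRing.Theory Num.Theory.
Local Open Scope ring_scope.

Set Implicit Arguments.
Unset Strict Implicit.
Unset Printing Implicit Defensive.

Section Aux.
Variable R : realType.
Local Notation C := (R[i]).


Lemma adjmx_entry m n (A : 'M[C]_(m, n)) i j : adjmx A i j = (A j i)^*.
Proof. by rewrite !mxE. Qed.

Lemma adjmxK m n (A : 'M[C]_(m, n)) : adjmx (adjmx A) = A.
Proof. by apply/matrixP=> i j; rewrite !mxE conjCK. Qed.

Lemma adjmx_mul m n p (A : 'M[C]_(m, n)) (B : 'M[C]_(n, p)) :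
  adjmx (A *m B) = adjmx B *m adjmx A.
Proof.
apply/matrixP=> i j; rewrite !mxE rmorph_sum; apply: eq_bigr => l _.
by rewrite !mxE rmorphM mulrC.
Qed.

Lemma adjmxD m n (A B : 'M[C]_(m, n)) : adjmx (A + B) = adjmx A + adjmx B.
Proof. by apply/matrixP=> i j; rewrite !mxE rmorphD. Qed.

Lemma adjmxN m n (A : 'M[C]_(m, n)) : adjmx (- A) = - adjmx A.
Proof. by apply/matrixP=> i j; rewrite !mxE rmorphN. Qed.

Lemma adjmxB m n (A B : 'M[C]_(m, n)) : adjmx (A - B) = adjmx A - adjmx B.
Proof. by rewrite adjmxD adjmxN. Qed.

Lemma adjmxZ m n (c : C) (A : 'M[C]_(m, n)) : adjmx (c *: A) = c^* *: adjmx A.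
Proof. by apply/matrixP=> i j; rewrite !mxE rmorphM. Qed.

Lemma adjmx_sum m n I (r : seq I) (P : pred I) (F : I -> 'M[C]_(m, n)) :
  adjmx (\sum_(i <- r | P i) F i) = \sum_(i <- r | P i) adjmx (F i).
Proof.
elim/big_rec2: _ => [|i x y _ <-]; first by apply/matrixP=> i j; rewrite !mxE rmorph0.
by rewrite adjmxD.
Qed.

Lemma adjmx1 n : adjmx (1%:M : 'M[C]_n) = 1%:M.
Proof. by apply/matrixP=> i j; rewrite !mxE eq_sym rmorph_nat. Qed.

Lemma adjmx0 m n : adjmx (0 : 'M[C]_(m, n)) = 0.
Proof. by apply/matrixP=> i j; rewrite !mxE rmorph0. Qed.

Lemma adjmx_delta m n (i : 'I_m) (j : 'I_n) :
  adjmx (delta_mx i j : 'M[C]_(m, n)) = delta_mx j i.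
Proof. by apply/matrixP=> p q; rewrite !mxE rmorph_nat andbC. Qed.

Lemma adjmx_tens m n p q (A : 'M[C]_(m, n)) (B : 'M[C]_(p, q)) :
  adjmx (A *t B) = adjmx A *t adjmx B.
Proof. by apply/matrixP=> i j; rewrite !mxE rmorphM. Qed.

Lemma quad_gram n (u : 'cV[C]_n) : 0 <= (adjmx u *m u) 0 0.
Proof.
rewrite !mxE; apply: sumr_ge0 => i _; rewrite !mxE mulrC; exact: mul_conjC_ge0.
Qed.

Lemma psd_gram p n (W : 'M[C]_(p, n)) : psd (adjmx W *m W).
Proof.
split; first by rewrite adjmx_mul adjmxK.
move=> v; rewrite -!mulmxA mulmxA -adjmx_mul; exact: quad_gram.
Qed.

Lemma psd_add n (A B : 'M[C]_n) : psd A -> psd B -> psd (A + B).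
Proof.
move=> [hA qA] [hB qB]; split; first by rewrite adjmxD hA hB.
move=> v; rewrite mulmxDr mulmxDl mxE; exact: addr_ge0.
Qed.

Lemma psd0 n : psd (0 : 'M[C]_n).
Proof. by split; [rewrite adjmx0 | move=> v; rewrite mulmx0 mul0mx mxE]. Qed.

Lemma psd_sum n I (r : seq I) (P : pred I) (F : I -> 'M[C]_n) :
  (forall i, P i -> psd (F i)) -> psd (\sum_(i <- r | P i) F i).
Proof.
move=> h; elim/big_rec: _ => [|i x Pi hx]; first exact: psd0.
exact: psd_add (h i Pi) hx.
Qed.

Lemma psd_compress n m (V : 'M[C]_(n, m)) (A : 'M[C]_n) :
  psd A -> psd (adjmx V *m A *m V).
Proof.
move=> [hA qA]; split; first by rewrite !adjmx_mul adjmxK hA mulmxA.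
move=> v; have := qA (V *m v).
by rewrite adjmx_mul !mulmxA.
Qed.

Lemma psd_scale n (c : C) (A : 'M[C]_n) : 0 <= c -> psd A -> psd (c *: A).
Proof.
move=> c0 [hA qA]; split; first by rewrite adjmxZ hA geC0_conj.
move=> v; rewrite -scalemxAr -scalemxAl mxE; exact: mulr_ge0.
Qed.

Local Open Scope sesquilinear_scope.
Lemma adjmx_tc m n (A : 'M[C]_(m, n)) : adjmx A = A ^t*.
Proof. by rewrite /adjmx map_trmx. Qed.
Local Close Scope sesquilinear_scope.

Lemma delta_entry n (M : 'M[C]_n) (i : 'I_n) :
  ((delta_mx 0 i : 'rV[C]_n) *m M *m (delta_mx i 0 : 'cV[C]_n)) 0 0 = M i i.
Proof. by rewrite -rowE -colE !mxE. Qed.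

Lemma psd_spectral n (A : 'M[C]_n) : psd A ->
  exists (P : 'M[C]_n) (d : 'rV[C]_n),
   [/\ P *m adjmx P = 1%:M, adjmx P *m P = 1%:M,
       A = adjmx P *m diag_mx d *m P & forall i, 0 <= d 0 i].
Proof.
move=> [hA qA].
have nA : A \is normalmx.
  by apply/normalmxP; rewrite -adjmx_tc hA.
have /orthomx_spectralP eA := nA.
have uP := spectral_unitarymx A.
have PP : spectralmx A *m adjmx (spectralmx A) = 1%:M.
  by rewrite adjmx_tc; apply/unitarymxP.
have PP' : adjmx (spectralmx A) *m spectralmx A = 1%:M by apply: mulmx1C.
have eA' : A = adjmx (spectralmx A) *m diag_mx (spectral_diag A) *m spectralmx A.
  by rewrite adjmx_tc -invmx_unitary.
exists (spectralmx A), (spectral_diag A); split => // i.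
set P := spectralmx A; set d := spectral_diag A.
have hD : P *m A *m adjmx P = diag_mx d.
  by rewrite eA' !mulmxA PP mul1mx -!mulmxA PP mulmx1.
have := qA (adjmx P *m delta_mx i 0).
rewrite adjmx_mul adjmxK.
have -> : adjmx (delta_mx i 0 : 'cV[C]_n) = delta_mx 0 i.
  by apply/matrixP=> p q; rewrite !mxE rmorph_nat andbC.
rewrite !mulmxA -(mulmxA _ P A) -(mulmxA _ (P *m A)) hD delta_entry.
by rewrite mxE eqxx mulr1n.
Qed.

Lemma adjmx_diag n (d : 'rV[C]_n) :
  adjmx (diag_mx d) = diag_mx (\row_i (d 0 i)^*).
Proof.
apply/matrixP=> p q; rewrite !mxE.
rewrite rmorphMn; have [->|npq] := eqVneq p q; first by [].
by rewrite !mulr0n.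
Qed.

Lemma diag_gram n (P : 'M[C]_n) (d : 'rV[C]_n) : (forall i, 0 <= d 0 i) ->
  adjmx P *m diag_mx d *m P =
  adjmx (diag_mx (\row_i sqrtC (d 0 i)) *m P) *m (diag_mx (\row_i sqrtC (d 0 i)) *m P).
Proof.
move=> hd; rewrite adjmx_mul adjmx_diag !mulmxA -[adjmx P *m _ *m diag_mx _]mulmxA mulmx_diag.
congr (_ *m diag_mx _ *m _); apply/rowP => i; rewrite !mxE.
by rewrite geC0_conj ?sqrtC_ge0 // -expr2 sqrtCK.
Qed.

Lemma psd_factor n (A : 'M[C]_n) : psd A -> exists W : 'M[C]_n, A = adjmx W *m W.
Proof.
move=> /psd_spectral [P [d [_ _ -> hd]]].
by eexists; apply: diag_gram.
Qed.

Lemma sum_tens (V : nmodType) m n (F : 'I_(m * n) -> V) :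
  \sum_(p < m * n) F p = \sum_(i < m) \sum_(j < n) F (mxtens_index (i, j)).
Proof.
rewrite pair_big /=.
rewrite (reindex (fun ij : 'I_m * 'I_n => mxtens_index ij)) /=.
  by apply: eq_bigr => -[i j].
by exists (@mxtens_unindex m n) => x _; rewrite (mxtens_indexK, mxtens_unindexK).
Qed.

Lemma sum_delta_r (V : pzSemiRingType) (I : finType) (F : I -> V) (q0 : I) :
  \sum_q F q * (q == q0)%:R = F q0.
Proof.
rewrite (bigD1 q0) //= eqxx mulr1 big1 ?addr0 // => q /negbTE ->.
by rewrite mulr0.
Qed.

Lemma sum_delta_l (V : pzSemiRingType) (I : finType) (F : I -> V) (q0 : I) :
  \sum_q (q == q0)%:R * F q = F q0.
Proof.
rewrite (bigD1 q0) //= eqxx mul1r big1 ?addr0 // => q /negbTE ->.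
by rewrite mul0r.
Qed.

Lemma mxtens_index_eq m n (i i' : 'I_m) (j j' : 'I_n) :
  (mxtens_index (i, j) == mxtens_index (i', j')) = (i == i') && (j == j').
Proof. by rewrite (can_eq (@mxtens_indexK m n)) xpair_eqE. Qed.

Lemma tr_tens m n (A : 'M[C]_m) (B : 'M[C]_n) : \tr (A *t B) = \tr A * \tr B.
Proof. by rewrite /mxtrace mulr_sum; apply: eq_bigr => p _; rewrite mxE. Qed.

Lemma ptrA_tens m n (A : 'M[C]_m) (B : 'M[C]_n) : ptrA (A *t B) = \tr A *: B.
Proof.
apply/matrixP=> j l; rewrite !mxE mulr_suml; apply: eq_bigr => i _.
by rewrite tensmxE.
Qed.

Lemma ptrAD m n (M N : 'M[C]_(m * n)) : ptrA (M + N) = ptrA M + ptrA N.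
Proof. by apply/matrixP=> j l; rewrite !mxE -big_split; apply: eq_bigr => i _; rewrite mxE. Qed.

Lemma ptrAZ m n (c : C) (M : 'M[C]_(m * n)) : ptrA (c *: M) = c *: ptrA M.
Proof. by apply/matrixP=> j l; rewrite !mxE mulr_sumr; apply: eq_bigr => i _; rewrite mxE. Qed.

Lemma ptrA0 m n : ptrA (0 : 'M[C]_(m * n)) = 0.
Proof. by apply/matrixP=> j l; rewrite !mxE big1 // => i _; rewrite mxE. Qed.

Lemma ptrAN m n (M : 'M[C]_(m * n)) : ptrA (- M) = - ptrA M.
Proof. by rewrite -scaleN1r ptrAZ scaleN1r. Qed.

Lemma ptrA_sum m n I (r : seq I) (P : pred I) (F : I -> 'M[C]_(m * n)) :
  ptrA (\sum_(i <- r | P i) F i) = \sum_(i <- r | P i) ptrA (F i).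
Proof. by elim/big_rec2: _ => [|i x y _ <-]; rewrite ?ptrA0 ?ptrAD. Qed.

Lemma tr_ptrA m n (M : 'M[C]_(m * n)) : \tr (ptrA M) = \tr M.
Proof.
rewrite /mxtrace sum_tens exchange_big /=; apply: eq_bigr => j _.
by rewrite mxE.
Qed.

Lemma mul_tens1_l m1 m n p (A : 'M[C]_(m1, m)) (N : 'M[C]_(m * n, p)) i j q :
  ((A *t 1%:M) *m N) (mxtens_index (i, j)) q
  = \sum_(i' < m) A i i' * N (mxtens_index (i', j)) q.
Proof.
rewrite mxE sum_tens; apply: eq_bigr => i' _.
rewrite (bigD1 j) //= big1 ?addr0.
  by rewrite tensmxE mxE eqxx mulr1.
by move=> j' nj; rewrite tensmxE mxE eq_sym (negbTE nj) mulr0 mul0r.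
Qed.

Lemma mul_tens1_r m1 m n p (A : 'M[C]_(m, m1)) (N : 'M[C]_(p, m * n)) i j q :
  (N *m (A *t 1%:M)) q (mxtens_index (i, j))
  = \sum_(i' < m) N q (mxtens_index (i', j)) * A i' i.
Proof.
rewrite mxE sum_tens; apply: eq_bigr => i' _.
rewrite (bigD1 j) //= big1 ?addr0.
  by rewrite tensmxE mxE eqxx mulr1.
by move=> j' nj; rewrite tensmxE mxE (negbTE nj) mulr0 mulr0.
Qed.

Lemma ptrA_cyc m n (A : 'M[C]_m) (N : 'M[C]_(m * n)) :
  ptrA ((A *t 1%:M) *m N) = ptrA (N *m (A *t 1%:M)).
Proof.
apply/matrixP=> j l; rewrite !mxE.
under eq_bigr do rewrite mul_tens1_l.
under [RHS]eq_bigr do rewrite mul_tens1_r.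
rewrite exchange_big /=; apply: eq_bigr => i _; apply: eq_bigr => i' _.
by rewrite mulrC.
Qed.

Definition Ei m n (i : 'I_m) : 'M[C]_(m * n, n) :=
  \matrix_(p, j) ((p == mxtens_index (i, j))%:R).

Lemma ptrA_kraus m n (M : 'M[C]_(m * n)) :
  ptrA M = \sum_i adjmx (@Ei m n i) *m M *m @Ei m n i.
Proof.
apply/matrixP=> j l; rewrite !mxE summxE; apply: eq_bigr => i _.
rewrite !mxE.
under eq_bigr do rewrite !mxE.
rewrite sum_delta_r.
under eq_bigr do rewrite !mxE rmorph_nat.
by rewrite sum_delta_l.
Qed.

Lemma psd_ptrA m n (M : 'M[C]_(m * n)) : psd M -> psd (ptrA M).
Proof.
move=> hM; rewrite ptrA_kraus; apply: psd_sum => i _; exact: psd_compress.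
Qed.

Lemma psd_tens m n (A : 'M[C]_m) (B : 'M[C]_n) : psd A -> psd B -> psd (A *t B).
Proof.
move=> /psd_factor [W ->] /psd_factor [Z ->].
rewrite -tensmx_mul -adjmx_tens; exact: psd_gram.
Qed.

Lemma adjmx_row m n1 n2 (A : 'M[C]_(m, n1)) (B : 'M[C]_(m, n2)) :
  adjmx (row_mx A B) = col_mx (adjmx A) (adjmx B).
Proof. by rewrite /adjmx map_row_mx tr_row_mx. Qed.

Lemma psd_block n m (S : 'M[C]_n) (T : 'M[C]_m) :
  psd S -> psd T -> psd (block_mx S 0 0 T).
Proof.
move=> hS hT.
have -> : block_mx S 0 0 T =
  adjmx (row_mx 1%:M 0 : 'M[C]_(n, n + m)) *m S *m row_mx 1%:M 0 +
  adjmx (row_mx 0 1%:M : 'M[C]_(m, n + m)) *m T *m row_mx 0 1%:M.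
  rewrite !adjmx_row !adjmx1 !adjmx0 [col_mx _ _ *m S]mul_col_mx [col_mx _ _ *m T]mul_col_mx !mul_col_row add_block_mx.
  by rewrite !mul1mx !mul0mx !mulmx0 !mulmx1 !addr0 !add0r.
by apply: psd_add; apply: psd_compress.
Qed.

Lemma psd_delta n (j : 'I_n) : psd (delta_mx j j : 'M[C]_n).
Proof.
have -> : (delta_mx j j : 'M[C]_n) = adjmx (delta_mx 0 j : 'M[C]_(1, n)) *m delta_mx 0 j.
  by rewrite adjmx_delta mul_delta_mx.
exact: psd_gram.
Qed.

Lemma psd1 n : psd (1%:M : 'M[C]_n).
Proof. by rewrite -(mulmx1 1%:M) -{1}adjmx1; exact: psd_gram. Qed.

Lemma quadC n (u : 'cV[C]_n) :
  (adjmx u *m u) 0 0 = ((\sum_i ((complex.Re (u i 0)) ^+ 2 + (complex.Im (u i 0)) ^+ 2)) %:C)%C.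
Proof.
rewrite rmorph_sum mxE; apply: eq_bigr => i _.
symmetry; etransitivity; first exact: add_Re2_Im2.
by rewrite normCK !mxE mulrC.
Qed.

Lemma vnormE n (u : 'cV[C]_n) (t : R) :
  (adjmx u *m u) 0 0 = (t%:C)%C -> vnorm u = Num.sqrt t.
Proof. by rewrite quadC /vnorm => /complexI ->. Qed.

Lemma vnorm1 n (u : 'cV[C]_n) : vnorm u = 1 -> (adjmx u *m u) 0 0 = 1.
Proof.
rewrite quadC /vnorm => h.
have s0 : 0 <= \sum_i ((complex.Re (u i 0)) ^+ 2 + (complex.Im (u i 0)) ^+ 2).
  by apply: sumr_ge0 => i _; apply: addr_ge0; apply: sqr_ge0.
by rewrite -(sqr_sqrtr s0) h expr1n.
Qed.

Lemma quad_diag n (w : 'cV[C]_n) (e : 'rV[C]_n) :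
  (adjmx w *m diag_mx e *m w) 0 0 = \sum_r (w r 0)^* * e 0 r * w r 0.
Proof.
rewrite mxE; apply: eq_bigr => r _; congr (_ * _).
rewrite mxE (bigD1 r) //= big1 ?addr0.
  by rewrite !mxE eqxx mulr1n.
by move=> s nsr; rewrite !mxE (negbTE nsr) mulr0n mulr0.
Qed.

Lemma diag_delta n (d : 'rV[C]_n) (i : 'I_n) :
  diag_mx d *m (delta_mx i 0 : 'cV[C]_n) = d 0 i *: delta_mx i 0.
Proof.
rewrite mul_diag_mx; apply/matrixP => r q; rewrite !mxE.
by case: (eqVneq r i) => [->|]; rewrite ?mulr0n ?mulr0.
Qed.

Lemma single_le_sum (I : finType) (F : I -> R) (i : I) :
  (forall j, 0 <= F j) -> F i <= \sum_j F j.
Proof.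
move=> h; rewrite (bigD1 i) //= lerDl; exact: sumr_ge0.
Qed.

Lemma psd_opnorm n (X : 'M[C]_n) (c : R) : psd X -> opnorm X <= c ->
  psd ((c%:C)%C *: 1%:M - X) /\ (c <= 0 -> X = 0).
Proof.
move=> hX hc; have [P [d [PP PP' eX hd]]] := @psd_spectral n X hX.
pose dr i := complex.Re (d 0 i).
have ed i : d 0 i = ((dr i)%:C)%C by rewrite RRe_real // ger0_real.
have dr0 i : 0 <= dr i by have := hd i; rewrite ed lecR.
have hub : has_ubound [set vnorm (X *m v) | v in [set v : 'cV[C]_n | vnorm v = 1]].
  exists (Num.sqrt (\sum_r dr r ^+ 2)) => _ [u /= hu <-].
  rewrite {1}/vnorm ler_sqrt; last by apply: sumr_ge0 => r _; apply: sqr_ge0.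
  rewrite -lecR -quadC adjmx_mul -mulmxA [adjmx X *m _]mulmxA.
  have -> : adjmx X *m X = adjmx P *m diag_mx (\row_r (d 0 r * d 0 r)) *m P.
    by rewrite hX.1 {1 2}eX !mulmxA -[_ *m P *m adjmx P]mulmxA PP mulmx1
      -[_ *m diag_mx d *m diag_mx d]mulmxA mulmx_diag.
  rewrite !mulmxA -adjmx_mul -mulmxA quad_diag.
  set w := P *m u.
  have hw : \sum_r (w r 0)^* * w r 0 = 1.
    have : (adjmx w *m w) 0 0 = 1.
      by rewrite /w adjmx_mul -mulmxA (mulmxA (adjmx P)) PP' mul1mx; exact: vnorm1.
    by rewrite mxE => <-; apply: eq_bigr => r _; rewrite !mxE.
  apply: (@le_trans _ _ (\sum_r (w r 0)^* * w r 0 * ((\sum_s dr s ^+ 2)%:C)%C)).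
    apply: ler_sum => r _; rewrite mxE mulrAC; apply: ler_wpM2l.
      by rewrite mulrC; apply: mul_conjC_ge0.
    rewrite mxE ed -rmorphM lecR -expr2; exact: (@single_le_sum _ (fun s => dr s ^+ 2) r (fun s => sqr_ge0 (dr s))).
  by rewrite -mulr_suml hw mul1r.
have dle i : dr i <= opnorm X.
  pose v := adjmx P *m (delta_mx i 0 : 'cV[C]_n).
  have av : adjmx v = delta_mx 0 i *m P by rewrite adjmx_mul adjmxK adjmx_delta.
  have hv1 : vnorm v = 1.
    rewrite -sqrtr1; apply: vnormE.
    by rewrite av mulmxA -[_ *m P *m adjmx P]mulmxA PP delta_entry mxE eqxx.
  have hXv : X *m v = d 0 i *: v.
    rewrite eX /v !mulmxA -[_ *m P *m adjmx P]mulmxA PP mulmx1 -mulmxA diag_delta.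
    by rewrite -scalemxAr.
  have nXv : vnorm (X *m v) = dr i.
    have -> : dr i = Num.sqrt (dr i ^+ 2) by rewrite sqrtr_sqr ger0_norm.
    apply: vnormE; rewrite hXv adjmxZ -scalemxAl -scalemxAr.
    rewrite [((_ *: _ : 'M_1) 0 0)]mxE [((_ *: _ : 'M_1) 0 0)]mxE (@vnorm1 n v hv1) mulr1 ed.
    by rewrite geC0_conj ?lecR // -rmorphM expr2.
  rewrite -nXv; apply: ub_le_sup => //; exists v => //.
have drc i : dr i <= c := le_trans (dle i) hc.
split.
  have -> : (c%:C)%C *: 1%:M - X = adjmx P *m diag_mx (\row_i ((c%:C)%C - d 0 i)) *m P.
    have -> : diag_mx (\row_i ((c%:C)%C - d 0 i)) = (c%:C)%C *: 1%:M - diag_mx d.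
      apply/matrixP => p q; rewrite !mxE.
      by case: (eqVneq p q) => [->|]; rewrite ?mulr1n ?mulr0n ?mulr1 ?mulr0 ?subr0.
    rewrite eX mulmxBr mulmxBl -scalemxAr mulmx1 -scalemxAl PP'.
    by rewrite -mulmxA.
  rewrite diag_gram; first exact: psd_gram.
  by move=> i; rewrite mxE subr_ge0 ed lecR.
move=> c0; rewrite eX.
have -> : d = 0.
  apply/rowP => i; rewrite ed mxE.
  by have -> : dr i = 0 by apply/le_anti; rewrite dr0 andbT; exact: le_trans (drc i) c0.
have -> : diag_mx (0 : 'rV[C]_n) = 0 by apply/matrixP => p q; rewrite !mxE mul0rn.
by rewrite mulmx0 mul0mx.
Qed.

Lemma ampl_ext n m k (E E' : 'M[C]_n -> 'M[C]_m) (M : 'M[C]_(n * k)) :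
  (forall N, E N = E' N) -> ampl k E M = ampl k E' M.
Proof. by move=> h; apply/matrixP => p q; rewrite !mxE h. Qed.

Lemma ampl_add n m k (E1 E2 : 'M[C]_n -> 'M[C]_m) (M : 'M[C]_(n * k)) :
  ampl k (fun N => E1 N + E2 N) M = ampl k E1 M + ampl k E2 M.
Proof. by apply/matrixP => p q; rewrite !mxE. Qed.

Lemma ampl_kraus n m k (K : 'M[C]_(n, m)) (M : 'M[C]_(n * k)) :
  ampl k (fun N => adjmx K *m N *m K) M
  = adjmx (K *t (1%:M : 'M[C]_k)) *m M *m (K *t (1%:M : 'M[C]_k)).
Proof.
apply/matrixP => p q.
case: (mxtens_indexP p) => i bt; case: (mxtens_indexP q) => j gm.
rewrite mxE !mxtens_indexK /= adjmx_tens adjmx1 mul_tens1_r mxE.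
apply: eq_bigr => i' _; congr (_ * _).
rewrite mul_tens1_l mxE; apply: eq_bigr => i'' _.
by rewrite !mxE.
Qed.

Lemma psd_ampl_kraus n m k (K : 'M[C]_(n, m)) (M : 'M[C]_(n * k)) :
  psd M -> psd (ampl k (fun N => adjmx K *m N *m K) M).
Proof. by move=> hM; rewrite ampl_kraus; exact: psd_compress. Qed.

Definition Ech n (M : 'M[C]_(n + n)) : 'M[C]_n := ulsubmx M + drsubmx M.

Lemma adjmx_col m1 m2 n (A : 'M[C]_(m1, n)) (B : 'M[C]_(m2, n)) :
  adjmx (col_mx A B) = row_mx (adjmx A) (adjmx B).
Proof. by rewrite /adjmx map_col_mx tr_col_mx. Qed.

Lemma Ech_kraus n (M : 'M[C]_(n + n)) :
  Ech M = adjmx (col_mx 1%:M 0 : 'M[C]_(n + n, n)) *m M *m col_mx 1%:M 0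
        + adjmx (col_mx 0 1%:M : 'M[C]_(n + n, n)) *m M *m col_mx 0 1%:M.
Proof.
rewrite !adjmx_col !adjmx1 !adjmx0 -{2 3}(submxK M) !mul_row_block !mul_row_col.
by rewrite !mul1mx !mul0mx !mulmx0 !mulmx1 !addr0 !add0r.
Qed.

Lemma tpcpm_Ech n : tpcpm (@Ech n).
Proof.
split.
- move=> a x y; apply/matrixP => i j; rewrite !mxE.
  by rewrite mulrDr addrACA.
- by move=> M; rewrite /Ech mxtraceD -{3}(submxK M) mxtrace_block.
- move=> k M hM; rewrite (@ampl_ext _ _ k _ _ M (@Ech_kraus n)) ampl_add.
  by apply: psd_add; apply: psd_ampl_kraus.
Qed.

Lemma sum_delta_mx k : (1%:M : 'M[C]_k) = \sum_j delta_mx j j.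
Proof.
apply/matrixP => p q; rewrite summxE (bigD1 p) //= big1 ?addr0.
  by rewrite !mxE eqxx /= eq_sym.
by move=> j nj; rewrite mxE eq_sym (negbTE nj).
Qed.

Lemma tr_delta k (j : 'I_k) : \tr (delta_mx j j : 'M[C]_k) = 1.
Proof.
rewrite /mxtrace (bigD1 j) //= big1 ?addr0; first by rewrite mxE eqxx.
by move=> i ni; rewrite mxE (negbTE ni).
Qed.

Lemma tensmxDl m n p q (A B : 'M[C]_(m, n)) (D : 'M[C]_(p, q)) :
  (A + B) *t D = A *t D + B *t D.
Proof. by apply/matrixP => i j; rewrite !mxE mulrDl. Qed.

Lemma tensmxDr m n p q (A : 'M[C]_(m, n)) (B D : 'M[C]_(p, q)) :
  A *t (B + D) = A *t B + A *t D.
Proof. by apply/matrixP => i j; rewrite !mxE mulrDr. Qed.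

Lemma tensmxZl m n p q (c : C) (A : 'M[C]_(m, n)) (D : 'M[C]_(p, q)) :
  (c *: A) *t D = c *: (A *t D).
Proof. by apply/matrixP => i j; rewrite !mxE mulrA. Qed.

Lemma tensmxZr m n p q (c : C) (A : 'M[C]_(m, n)) (D : 'M[C]_(p, q)) :
  A *t (c *: D) = c *: (A *t D).
Proof. by apply/matrixP => i j; rewrite !mxE mulrCA. Qed.

Lemma tensmxNl m n p q (A : 'M[C]_(m, n)) (D : 'M[C]_(p, q)) :
  (- A) *t D = - (A *t D).
Proof. by rewrite -scaleN1r tensmxZl scaleN1r. Qed.

Lemma tensmxNr m n p q (A : 'M[C]_(m, n)) (D : 'M[C]_(p, q)) :
  A *t (- D) = - (A *t D).
Proof. by rewrite -scaleN1r tensmxZr scaleN1r. Qed.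

Lemma tensmx_suml m n p q I (r : seq I) (P : pred I) (F : I -> 'M[C]_(m, n)) (D : 'M[C]_(p, q)) :
  (\sum_(i <- r | P i) F i) *t D = \sum_(i <- r | P i) (F i *t D).
Proof.
elim/big_rec2: _ => [|i x y _ <-]; last by rewrite tensmxDl.
by apply/matrixP => i j; rewrite !mxE mul0r.
Qed.

Definition Gm a b (rho : 'M[C]_(a * b)) (Y : 'M[C]_a) : 'M[C]_b :=
  ptrA ((Y *t (1%:M : 'M[C]_b)) *m rho).
Arguments Gm {a b}.

Lemma GmD a b (rho : 'M[C]_(a * b)) Y1 Y2 : Gm rho (Y1 + Y2) = Gm rho Y1 + Gm rho Y2.
Proof. by rewrite /Gm tensmxDl mulmxDl ptrAD. Qed.

Lemma GmZ a b (rho : 'M[C]_(a * b)) c Y : Gm rho (c *: Y) = c *: Gm rho Y.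
Proof. by rewrite /Gm tensmxZl -scalemxAl ptrAZ. Qed.

Lemma GmN a b (rho : 'M[C]_(a * b)) Y : Gm rho (- Y) = - Gm rho Y.
Proof. by rewrite -scaleN1r GmZ scaleN1r. Qed.

Lemma Gm_sum a b (rho : 'M[C]_(a * b)) I (r : seq I) (P : pred I) (F : I -> 'M[C]_a) :
  Gm rho (\sum_(i <- r | P i) F i) = \sum_(i <- r | P i) Gm rho (F i).
Proof.
elim/big_rec2: _ => [|i x y _ <-]; last by rewrite GmD.
by rewrite /Gm tens0mx mul0mx ptrA0.
Qed.

Lemma tens11 m n : (1%:M : 'M[C]_m) *t (1%:M : 'M[C]_n) = 1%:M.
Proof.
apply/matrixP => p q.
case: (mxtens_indexP p) => i j; case: (mxtens_indexP q) => i' j'.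
by rewrite tensmxE !mxE mxtens_index_eq -natrM mulnb.
Qed.

Lemma Gm1 a b (rho : 'M[C]_(a * b)) : Gm rho 1%:M = ptrA rho.
Proof. by rewrite /Gm tens11 mul1mx. Qed.

Lemma psd_Gm a b (rho : 'M[C]_(a * b)) Y : psd rho -> psd Y -> psd (Gm rho Y).
Proof.
move=> hr /psd_factor [V ->]; rewrite /Gm.
have -> : (adjmx V *m V) *t (1%:M : 'M[C]_b) = adjmx (V *t 1%:M) *m (V *t 1%:M).
  by rewrite adjmx_tens adjmx1 tensmx_mul mulmx1.
rewrite -mulmxA.
have -> : adjmx (V *t (1%:M : 'M[C]_b)) = adjmx V *t 1%:M by rewrite adjmx_tens adjmx1.
rewrite ptrA_cyc.
have -> : adjmx V *t (1%:M : 'M[C]_b) = adjmx (V *t 1%:M) by rewrite adjmx_tens adjmx1.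
apply: psd_ptrA; rewrite -{1}(@adjmxK _ _ (V *t (1%:M : 'M[C]_b))); exact: psd_compress.
Qed.

Lemma S_eq a b k (X : 'I_k -> 'M[C]_a) (rho : 'M[C]_(a * b)) :
  ampl b (measmap X) rho = \sum_j (delta_mx j j *t Gm rho (X j)).
Proof.
apply/matrixP => p q.
case: (mxtens_indexP p) => i bt; case: (mxtens_indexP q) => i' gm.
rewrite mxE !mxtens_indexK /= mxE summxE.
under eq_bigr do rewrite tensmxE mxE.
case: (eqVneq i i') => [<-|nii].
  rewrite (bigD1 i) //= big1 ?addr0; last first.
    by move=> j nj; rewrite eq_sym (negbTE nj) mul0r.
  rewrite eqxx mul1r /Gm mxE /mxtrace; apply: eq_bigr => al _.
  rewrite mul_tens1_l !mxE; apply: eq_bigr => al' _.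
  by rewrite !mxE.
rewrite big1 // => j _.
by case: (eqVneq i j) => [<-|_] /=; rewrite ?mul0r // eq_sym (negbTE nii) /= mul0r.
Qed.

Lemma tr1_pos n (M : 'M[C]_n) : \tr M = 1 -> (0 < n)%N.
Proof. by case: n M => // M; rewrite /mxtrace big_ord0 => /eqP; rewrite eq_sym oner_eq0. Qed.

Lemma sum1_pos a k (X : 'I_k -> 'M[C]_a) : (0 < a)%N -> \sum_j X j = 1%:M -> (0 < k)%N.
Proof.
case: k X => // X a0; rewrite big_ord0 => /matrixP /(_ (Ordinal a0) (Ordinal a0)).
by rewrite !mxE eqxx /= => /eqP; rewrite eq_sym oner_eq0.
Qed.
End Aux.

Theorem lemma2 (R : realType) (base : R) (hbase : 1 < base)
  (D : Dfam R) (Ha : propA D) (Hb : propB D) (Hc : propC base D) (Hd : propD D)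
  (f : cform) (a b k : nat) (X : 'I_k -> 'M[R[i]]_a) (HX : povm X)
  (rho : 'M[R[i]]_(a * b)) (Hrho : density rho) :
  ((logb base (1 / cX X))%:E <= HK f D (ampl b (measmap X) rho))%E.
Proof.
have [hrho trrho] := Hrho.
have [hXpsd hXsum] := HX.
have ab0 : (0 < a * b)%N := tr1_pos trrho.
have a0 : (0 < a)%N by move: ab0; rewrite muln_gt0 => /andP[].
have b0 : (0 < b)%N by move: ab0; rewrite muln_gt0 => /andP[].
have k0 : (0 < k)%N := sum1_pos a0 hXsum.
have n0 : (0 < k * b)%N by rewrite muln_gt0 k0 b0.
set S := ampl b (measmap X) rho.
have eS : S = \sum_j (delta_mx j j *t Gm rho (X j)) := S_eq X rho.
have hS : psd S.
  by rewrite eS; apply: psd_sum => j _; apply: psd_tens; [exact: psd_delta | exact: psd_Gm].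
have ptrS : ptrA S = Gm rho 1%:M.
  rewrite eS ptrA_sum -hXsum Gm_sum; apply: eq_bigr => j _.
  by rewrite ptrA_tens tr_delta scale1r.
have trS : \tr S = 1 by rewrite -tr_ptrA ptrS Gm1 tr_ptrA.
have dS : density S by [].
set c := cX X.
have copn j : opnorm (X j) <= c by exact: le_bigmax.
have hc0 : 0 < c.
  rewrite ltNge; apply/negP => c0.
  have X0 j : X j = 0 := (psd_opnorm (hXpsd j) (copn j)).2 c0.
  move: hXsum; rewrite big1 // => /matrixP /(_ (Ordinal a0) (Ordinal a0)).
  by rewrite !mxE eqxx /= => /eqP; rewrite eq_sym oner_eq0.
set T1 := (1%:M : 'M[R[i]]_k) *t ptrA S.
set T' := ((c%:C)%C *: T1) - S.
have eT' : T' = \sum_j (delta_mx j j *t Gm rho ((c%:C)%C *: 1%:M - X j)).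
  rewrite /T' /T1 ptrS eS.
  under [RHS]eq_bigr do rewrite GmD GmN GmZ tensmxDr tensmxNr.
  by rewrite sumrB -tensmx_suml -sum_delta_mx tensmxZr.
have hT' : psd T'.
  rewrite eT'; apply: psd_sum => j _; apply: psd_tens; first exact: psd_delta.
  exact/psd_Gm/(psd_opnorm (hXpsd j) (copn j)).1.
have hT1 : psd T1 by apply: psd_tens; [exact: psd1 | exact: psd_ptrA].
have eE0 : Ech (block_mx S 0 0 0) = S by rewrite /Ech block_mxKul block_mxKdr addr0.
have eE1 : Ech (block_mx S 0 0 T') = (c%:C)%C *: T1.
  by rewrite /Ech block_mxKul block_mxKdr /T' addrC subrK.
have nn0 : (0 < k * b + k * b)%N by rewrite addn_gt0 n0.
have HA := Ha _ _ (@Ech _ (k * b)) nn0 n0 (tpcpm_Ech _ _) (block_mx S 0 0 0)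
  (block_mx S 0 0 T') (psd_block hS (psd0 _ _)) (psd_block hS hT').
rewrite eE0 eE1 (Hb _ _ n0 n0 S S T' hS hS hT') (Hd _ n0 S dS)
  (Hc _ n0 S T1 c hS hT1 hc0) in HA.
have key : ((logb base (1 / c))%:E <= - D (k * b)%N S T1)%E.
  move: HA; case: (D (k * b)%N S T1) => [r| |] /=.
  - by rewrite -EFinD !lee_fin => h; lra.
  - by [].
  - by move=> _; exact: leey.
case: f => /=; first exact: key.
apply: le_trans key _; apply: ereal_sup_ubound; exists (ptrA S) => //.
by split; [exact: psd_ptrA | rewrite tr_ptrA].
Qed.
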